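(* Let $0\to N\to G\xrightarrow{p} Q\to 1$ be a short exact sequence of groups with $N$ abelian (written additively), and let $C_G(N)$ be the centralizer of $N$ in $G$, a $Q$-group via $p(x)\cdot g=x+g-x$. Let $End^N(G)$ be the set of endomorphisms $\alpha$ of $G$ with $\alpha|_N=\mathrm{id}_N$. Then there is a bijection $End^N(G)\to Z^1(Q,C_G(N))$ sending $\alpha$ to the map $\psi$ determined by $\alpha(x)=\psi(p(x))+x$ for $x\in G$.
   Context: For a group $Q$ acting on a (not necessarily abelian) group $U$, $Z^1(Q,U)$ is the set of crossed homomorphisms $\psi:Q\to U$, i.e. $\psi(x+y)=\psi(x)+x\cdot\psi(y)$. *)

(* Defs.v *)
(* general (possibly infinite, non-abelian) groups as an
   explicit record, written additively as in the paper. *)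
Set Implicit Arguments.

Record Grp := Grp_ {
  carrier :> Type;
  gadd : carrier -> carrier -> carrier;
  gzero : carrier;
  gopp : carrier -> carrier;
  gaddA : forall x y z, gadd x (gadd y z) = gadd (gadd x y) z;
  gadd0l : forall x, gadd gzero x = x;
  gaddNl : forall x, gadd (gopp x) x = gzero
}.

Arguments gadd {g}.
Arguments gzero {g}.
Arguments gopp {g}.

Declare Scope grp_scope.
Delimit Scope grp_scope with G.
Notation "x + y" := (gadd x y) : grp_scope.
Notation "- x" := (gopp x) : grp_scope.
Notation "x - y" := (gadd x (gopp y)) : grp_scope.
Notation "0" := gzero : grp_scope.
Local Open Scope grp_scope.

Definition is_hom {G H : Grp} (f : G -> H) : Prop :=
  forall x y : G, f (x + y) = f x + f y.

Definition short_exact {N G Q : Grp} (i : N -> G) (p : G -> Q) : Prop :=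
  is_hom i /\ (forall a b, i a = i b -> a = b) /\
  is_hom p /\ (forall q : Q, exists x : G, p x = q) /\
  (forall g : G, p g = 0 <-> exists n : N, i n = g).

Definition abelian (N : Grp) : Prop := forall a b : N, a + b = b + a.

Definition in_centralizer {N G : Grp} (i : N -> G) (g : G) : Prop :=
  forall n : N, g + i n = i n + g.

Definition EndN {N G : Grp} (i : N -> G) : Type :=
  { a : G -> G | is_hom a /\ forall n : N, a (i n) = i n }.

(* crossed homomorphism condition psi(q+q') = psi(q) + q.psi(q'), where the
   Q-action on C_G(N) is p(x).g = x + g - x; since p is surjective, we
   quantify over preimages x, y of q, q'. *)
Definition crossed_hom {G Q : Grp} (p : G -> Q) (psi : Q -> G) : Prop :=
  forall x y : G, psi (p x + p y) = psi (p x) + (x + psi (p y) - x).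

Definition Z1 {N G Q : Grp} (i : N -> G) (p : G -> Q) : Type :=
  { psi : Q -> G | (forall q : Q, in_centralizer i (psi q)) /\ crossed_hom p psi }.

Definition bijective_map {A B : Type} (F : A -> B) : Prop :=
  (forall a b, F a = F b -> a = b) /\ (forall z, exists a, F a = z).

(* Main.v *)
Require Import Defs.
From Stdlib Require Import ClassicalEpsilon FunctionalExtensionality ProofIrrelevance.
Local Open Scope grp_scope.
Arguments gaddA {g}. Arguments gadd0l {g}. Arguments gaddNl {g}.

Section GL.
Variable G : Grp.
Implicit Types x y z : G.
Lemma addNr x : x + - x = 0.
Proof.
  rewrite <- (gadd0l (x + - x)). rewrite <- (gaddNl (- x)) at 1.
  rewrite <- gaddA. rewrite (gaddA (- x) x). rewrite gaddNl, gadd0l. apply gaddNl.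
Qed.
Lemma addr0 x : x + 0 = x.
Proof. rewrite <- (gaddNl x), gaddA, addNr. apply gadd0l. Qed.
Lemma addKl x y : - x + (x + y) = y.
Proof. rewrite gaddA, gaddNl. apply gadd0l. Qed.
Lemma addNKl x y : x + (- x + y) = y.
Proof. rewrite gaddA, addNr. apply gadd0l. Qed.
Lemma addrK x y : (y + x) - x = y.
Proof. rewrite <- gaddA, addNr. apply addr0. Qed.
Lemma addrNK x y : (y - x) + x = y.
Proof. rewrite <- gaddA, gaddNl. apply addr0. Qed.
Lemma addIl x y z : x + y = x + z -> y = z.
Proof. intro H. rewrite <- (addKl x y), H. apply addKl. Qed.
Lemma oppD x y : - (x + y) = - y + - x.
Proof.
  apply (addIl (x + y)). rewrite addNr. rewrite <- gaddA, (gaddA y), addNr, gadd0l.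
  symmetry; apply addNr.
Qed.
End GL.
Arguments addNr {G}. Arguments addr0 {G}. Arguments addKl {G}. Arguments addNKl {G}. Arguments addrK {G}. Arguments addrNK {G}. Arguments addIl {G}. Arguments oppD {G}.

Lemma hom0 (G H : Grp) (f : G -> H) : is_hom f -> f 0 = 0.
Proof.
  intro Hf. apply (addIl (f 0)). rewrite <- Hf, !addr0. reflexivity.
Qed.
Lemma homN (G H : Grp) (f : G -> H) x : is_hom f -> f (- x) = - f x.
Proof.
  intro Hf. apply (addIl (f x)). rewrite <- Hf, !addNr. apply hom0; auto.
Qed.

Arguments hom0 {G H}.
Lemma sig_eq (A : Type) (P : A -> Prop) (x y : sig P) : proj1_sig x = proj1_sig y -> x = y.
Proof. destruct x, y; simpl; intros; subst; f_equal; apply proof_irrelevance. Qed.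

Theorem lemma15 (N G Q : Grp) (i : N -> G) (p : G -> Q)
  (Hses : short_exact i p) (HN : abelian N) :
  exists F : EndN i -> Z1 i p,
    bijective_map F /\
    forall (a : EndN i) (x : G), proj1_sig a x = proj1_sig (F a) (p x) + x.
Proof.
  destruct Hses as [Hi [Iinj [Hp [Psurj Hker]]]].
  set (pre := fun q => proj1_sig (constructive_indefinite_description _ (Psurj q))).
  assert (Hpre : forall q, p (pre q) = q).
  { intro q. unfold pre. destruct (constructive_indefinite_description _ _); auto. }
  assert (WD : forall (a : G -> G), is_hom a -> (forall n, a (i n) = i n) ->
            forall x y, p x = p y -> a x - x = a y - y).
  { intros a Ha Hfix x y Hxy.
    assert (Hk : p (- x + y) = 0).
    { rewrite Hp, homN, Hxy by auto. apply gaddNl. }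
    apply Hker in Hk. destruct Hk as [n Hn].
    assert (Ey : y = x + i n) by (rewrite Hn; symmetry; apply addNKl).
    rewrite Ey, Ha, Hfix, oppD, gaddA, addrK. reflexivity. }
  assert (CEN : forall (a : G -> G), is_hom a -> (forall n, a (i n) = i n) ->
            forall x, in_centralizer i (a x - x)).
  { intros a Ha Hfix x n.
    assert (Hk : p (- x + (i n + x)) = 0).
    { assert (p (i n) = 0) by (apply Hker; eauto).
      rewrite !Hp, H, gadd0l, homN by auto. apply gaddNl. }
    apply Hker in Hk. destruct Hk as [m Hm].
    assert (Hm' : a (- x + (i n + x)) = i m) by (rewrite <- Hm; apply Hfix).
    rewrite !Ha, Hfix, homN in Hm' by auto.
    assert (E1 : i n + (a x - x) = a x + (- a x + (i n + a x)) - x).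
    { rewrite addNKl. rewrite !gaddA. reflexivity. }
    rewrite E1, Hm', Hm. rewrite !gaddA.
    rewrite (addrK x (a x + - x + i n)). reflexivity. }
  unshelve eexists.
  { intros [a [Ha Hfix]]. exists (fun q => a (pre q) - pre q). split.
    - intro q. apply CEN; auto.
    - intros x y. rewrite (WD a Ha Hfix (pre (p x + p y)) (x + y)) by (rewrite Hpre, Hp; auto).
      rewrite (WD a Ha Hfix (pre (p x)) x) by apply Hpre.
      rewrite (WD a Ha Hfix (pre (p y)) y) by apply Hpre.
      rewrite Ha, oppD. rewrite !gaddA. rewrite addrNK. reflexivity. }
  assert (FORM : forall (a : EndN i) x, proj1_sig a x =
     proj1_sig a (pre (p x)) - pre (p x) + x).
  { intros [a [Ha Hfix]] x. simpl.
    rewrite (WD a Ha Hfix (pre (p x)) x) by apply Hpre. symmetry; apply addrNK. }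
  split; [split|].
  - intros [a [Ha Hfa]] [b [Hb Hfb]] E.
    assert (Eab : a = b).
    { apply functional_extensionality. intro x.
      pose proof (FORM (exist _ a (conj Ha Hfa)) x) as E1.
      pose proof (FORM (exist _ b (conj Hb Hfb)) x) as E2. simpl in *.
      rewrite E1, E2. apply (f_equal (@proj1_sig _ _)) in E. simpl in E.
      apply (f_equal (fun f => f (p x))) in E. rewrite E. reflexivity. }
    subst b. f_equal. apply proof_irrelevance.
  - intros [psi [Hc Hcr]].
    assert (P0 : psi 0 = 0).
    { pose proof (Hcr 0 0) as H. rewrite (hom0 p Hp), gadd0l in H.
      assert (O0 : - (0:G) = 0) by (rewrite <- (gadd0l (- (0:G))); apply addNr).
      rewrite gadd0l, O0, addr0 in H. rewrite <- (addr0 (psi 0)) in H at 1.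
      symmetry. exact (addIl _ _ _ H). }
    assert (Ha : is_hom (fun x => psi (p x) + x)).
    { intros x y. rewrite Hp, Hcr. rewrite !gaddA. rewrite addrNK. reflexivity. }
    assert (Hf : forall n, psi (p (i n)) + i n = i n).
    { intro n. assert (p (i n) = 0) by (apply Hker; eauto). rewrite H, P0. apply gadd0l. }
    exists (exist (fun a : G -> G => is_hom a /\ forall n : N, a (i n) = i n) _ (conj Ha Hf)). simpl.
    assert (E : (fun q => psi (p (pre q)) + pre q - pre q) = psi).
    { apply functional_extensionality. intro q. rewrite addrK, Hpre. reflexivity. }
    apply sig_eq. simpl. exact E.
  - intros [a [Ha Hfix]] x. simpl.
    rewrite (WD a Ha Hfix (pre (p x)) x) by apply Hpre. symmetry; apply addrNK.
Qed.
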